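(* Let $\mathbb{K}$ be an algebraically closed field of characteristic zero, $X$ an irreducible affine variety over $\mathbb{K}$, and $U\subseteq X$ a principal open subset (i.e., $U=\{x\in X\mid h(x)\neq 0\}$ for some $h\in\mathbb{K}[X]$). Then for any $\mathbb{G}_a$-subgroup $H$ of $\mathrm{Aut}(U)$ there exists a $\mathbb{G}_a$-subgroup $H'$ of $\mathrm{Aut}(X)$ such that $Hx = H'x$ for every $x\in U$.
   Context: $\mathbb{G}_a=(\mathbb{K},+)$; a $\mathbb{G}_a$-subgroup of the automorphism group of a variety is the image of an effective regular $\mathbb{G}_a$-action on it. *)

(* Defs.v *)
From HB Require Import structures.
From mathcomp Require Import all_boot all_order all_algebra.
From mathcomp Require Import mpoly.
Set Implicit Arguments. Unset Strict Implicit. Unset Printing Implicit Defensive.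
Import GRing.Theory.
Local Open Scope ring_scope.

Section Defs.
Variables (K : fieldType) (n : nat).

Definition point := 'I_n -> K.

Definition zclosed (Z : point -> Prop) : Prop :=
  exists S : {mpoly K[n]} -> Prop,
    forall x, Z x <-> (forall p, S p -> p.@[x] = 0).

Definition irreducible (X : point -> Prop) : Prop :=
  (exists x, X x) /\
  forall Z1 Z2, zclosed Z1 -> zclosed Z2 ->
    (forall x, X x -> Z1 x \/ Z2 x) ->
    (forall x, X x -> Z1 x) \/ (forall x, X x -> Z2 x).

Definition principal_open (X : point -> Prop) (h : {mpoly K[n]}) : point -> Prop :=
  fun x => X x /\ h.@[x] != 0.

(* A regular map A^1 x X_h -> K^n: each coordinate is a regular function on
   A^1 x X_h, i.e. an element of K[X]_h[t], written P_i(t, x) / h(x)^k with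
   P_i in K[x_1..x_n][t]. *)
Definition ga_map (h : {mpoly K[n]}) (P : 'I_n -> {poly {mpoly K[n]}}) (k : nat)
  (t : K) (x : point) : point :=
  fun i => (map_poly (meval x) (P i)).[t] / (h.@[x]) ^+ k.

(* (P, k) defines an effective regular G_a-action on the principal open set
   U = X_h (for h = 1 this is an effective regular G_a-action on X). *)
Definition is_Ga_action (X : point -> Prop) (h : {mpoly K[n]})
  (P : 'I_n -> {poly {mpoly K[n]}}) (k : nat) : Prop :=
  let U := principal_open X h in
  let a := ga_map h P k in
  [/\ forall t x, U x -> U (a t x),
      forall x, U x -> a 0 x = x,
      forall s t x, U x -> a (s + t) x = a s (a t x)
    & forall t, t != 0 -> exists x, U x /\ a t x <> x].

Definition ga_orbit (h : {mpoly K[n]}) (P : 'I_n -> {poly {mpoly K[n]}}) (k : nat)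
  (x : point) : point -> Prop :=
  fun y => exists t : K, y = ga_map h P k t x.

End Defs.

(* Main.v *)
Require Import Defs.
From HB Require Import structures.
From mathcomp Require Import all_boot all_order all_algebra.
From mathcomp Require Import mpoly.
From mathcomp Require Import ring.
From Stdlib Require Import FunctionalExtensionality Classical.
Set Implicit Arguments. Unset Strict Implicit. Unset Printing Implicit Defensive.
Import GRing.Theory.
Local Open Scope ring_scope.

Lemma hdrop (R : comNzRingType) (p : {poly R}) y : p.[y] = p`_0 + (drop_poly 1 p).[y] * y.
Proof.
rewrite -{1}(poly_take_drop 1 p) hornerD hornerM hornerXn expr1; congr (_ + _).
have /size1_polyC -> : (size (take_poly 1 p) <= 1)%N by apply: size_take_poly.
by rewrite hornerC coef_take_poly.
Qed.

Lemma inf_roots (K : fieldType) (hK : [pchar K] =i pred0) (g : {poly K}) c :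
  c != 0 -> (forall m : nat, g.[m%:R * c] = 0) -> g = 0.
Proof.
move=> c0 hg; apply: (roots_geq_poly_eq0 (rs := mkseq (fun m : nat => m%:R * c) (size g))).
- by apply/allP => z /mapP [m _ ->]; apply/rootP.
- rewrite map_inj_uniq ?iota_uniq // => a b /(mulIf c0) e.
  have /pcharf0P hK' := hK.
  wlog le: a b e / (a <= b)%N.
    by move=> W; case: (leqP a b) => [|/ltnW] l; [ | apply/esym]; apply: W.
  apply/eqP; rewrite eqn_leq le /= -subn_eq0 -hK' natrB // e subrr //.
- by rewrite size_mkseq.
Qed.

Section Main.
Variables (K : closedFieldType) (n : nat) (h : {mpoly K[n]}) (P : 'I_n -> {poly {mpoly K[n]}}) (k : nat).

Definition ev (x : point K n) (p : {poly {mpoly K[n]}}) t := (map_poly (meval x) p).[t].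

Lemma evE x p (y : {mpoly K[n]}) : ev x p (y.@[x]) = (p.[y]).@[x].
Proof. by rewrite /ev horner_map. Qed.

Lemma evC x p t : ev x p t = (p.[t%:MP]).@[x].
Proof. by rewrite -evE mevalC. Qed.

Definition Dp i := drop_poly 1 (P i).
Definition Q i : {poly {mpoly K[n]}} := ('X_i)%:P + 'X * (Dp i \Po ((h ^+ k)%:P * 'X)).
Definition Qt t i := (Q i).[t%:MP].

Lemma QtE t i : Qt t i = 'X_i + t%:MP * (Dp i).[h ^+ k * t%:MP].
Proof. by rewrite /Qt /Q hornerD hornerC hornerM hornerX horner_comp hornerM hornerC hornerX. Qed.

Lemma gmapQ t x : ga_map 1 Q 0 t x = fun i => (Qt t i).@[x].
Proof. by apply: functional_extensionality => i; rewrite /ga_map expr0 divr1 -evC. Qed.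

Lemma gmapP s x i : ga_map h P k s x i = (((P i)`_0).@[x] + ev x (Dp i) s * s) / h.@[x] ^+ k.
Proof. by rewrite /ga_map -/(ev _ _ _) evC hdrop mevalD mevalM mevalC -evC. Qed.

Definition qtup t := [tuple Qt t i | i < n].

Lemma compQ t x (r : {mpoly K[n]}) : r.@[ga_map 1 Q 0 t x] = (r \mPo qtup t).@[x].
Proof. by rewrite comp_mpoly_meval gmapQ; apply: meval_eq => i; rewrite tnth_mktuple. Qed.


Variables (X : point K n -> Prop) (hH : is_Ga_action X h P k).
Let U := principal_open X h.
Let a := ga_map h P k.

Lemma stabU t x : U x -> U (a t x). Proof. by move: hH; rewrite /is_Ga_action /= => -[A _ _ _]; apply: A. Qed.
Lemma id0 x : U x -> a 0 x = x. Proof. by move: hH; rewrite /is_Ga_action /= => -[_ A _ _]; apply: A. Qed.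
Lemma compU s t x : U x -> a (s + t) x = a s (a t x). Proof. by move: hH; rewrite /is_Ga_action /= => -[_ _ A _]; apply: A. Qed.

Lemma c0E x i : U x -> ((P i)`_0).@[x] = x i * h.@[x] ^+ k.
Proof.
move=> Ux; have := congr1 (fun f => f i) (id0 Ux); rewrite /a gmapP mulr0 addr0 => <-.
have Hn : h.@[x] ^+ k != 0 by rewrite expf_neq0 //; case: Ux.
by rewrite divfK.
Qed.

Lemma E1 t x : U x -> ga_map 1 Q 0 t x = a (h.@[x] ^+ k * t) x.
Proof.
move=> Ux; apply: functional_extensionality => i.
rewrite gmapQ /a gmapP c0E // QtE mevalD mevalXU mevalM mevalC -evE.
rewrite mevalM mevalC rmorphXn /=.
have Hn : h.@[x] ^+ k != 0 by rewrite expf_neq0 //; case: Ux.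
field; exact Hn.
Qed.

Lemma hinv s x : U x -> h.@[a s x] = h.@[x].
Proof.
move=> Ux.
pose pts i : {poly K} := map_poly (meval x) (P i) * ((h.@[x] ^+ k)^-1)%:P.
have ptsE t : a t x = fun i => (pts i).[t].
  by apply: functional_extensionality => i; rewrite /a /ga_map /pts hornerM hornerC.
pose G := \sum_(m <- msupp h) (h@_m)%:P * \prod_(i < n) (pts i) ^+ m i.
have GE t : G.[t] = h.@[a t x].
  rewrite ptsE mevalE /G -[G.[t]]/(horner_eval t G) rmorph_sum /=.
  apply: eq_bigr => m _; rewrite rmorphM rmorph_prod /= /horner_eval hornerC.
  by congr (_ * _); apply: eq_bigr => i _; rewrite horner_exp.
have Gn t : G.[t] != 0 by rewrite GE; have [] := stabU t Ux.
have /size1_polyC GC : (size G <= 1)%N.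
  case: (eqVneq (size G) 1) => [-> //|/closed_rootP [z /rootP Gz]].
  by move: (Gn z); rewrite Gz eqxx.
by rewrite -GE GC hornerC -(hornerC (G`_0) 0) -GC GE id0.
Qed.

Lemma eff_ex : exists x, U x.
Proof.
move: hH; rewrite /is_Ga_action /= => -[_ _ _ A].
by have [x [Ux _]] := A 1 (oner_neq0 _); exists x.
Qed.

Hypothesis hXi : irreducible X.

Lemma dens (r : {mpoly K[n]}) : (forall x, U x -> r.@[x] = 0) -> forall x, X x -> r.@[x] = 0.
Proof.
move=> hr.
have [x0 Ux0] := eff_ex.
case: hXi => _ /(_ (fun x => r.@[x] = 0) (fun x => h.@[x] = 0)) H.
case: H.
- by exists (fun p => p = r) => x; split => [Hx p -> | Hx]; [ | apply: Hx].
- by exists (fun p => p = h) => x; split => [Hx p -> | Hx]; [ | apply: Hx].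
- move=> x Xx; case: (eqVneq h.@[x] 0) => hx; [by right | left; apply: hr; split => //].
- by [].
- by move=> Z2; case: Ux0 => Xx0; rewrite Z2 // eqxx.
Qed.


Lemma hU x : U x -> h.@[x] ^+ k != 0.
Proof. by case=> _ hx; rewrite expf_neq0. Qed.

Lemma compQU s t x : U x -> ga_map 1 Q 0 (s + t) x = ga_map 1 Q 0 s (ga_map 1 Q 0 t x).
Proof.
move=> Ux; have Uy : U (ga_map 1 Q 0 t x) by rewrite E1 //; apply: stabU.
rewrite [LHS]E1 // mulrDr compU // [RHS]E1 // E1 // hinv //.
Qed.

Lemma po1 x : principal_open X 1 x <-> X x.
Proof. by split=> [[]//|Xx]; split => //; rewrite meval1 oner_neq0. Qed.

Hypothesis hXc : zclosed X.
Hypothesis hK : [pchar K] =i pred0.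

Lemma main_Q : is_Ga_action X 1 Q 0 /\
  forall x, U x -> forall y, ga_orbit h P k x y <-> ga_orbit 1 Q 0 x y.
Proof.
split; last first.
  move=> x Ux y; split => -[t ->].
    by exists (t / h.@[x] ^+ k); rewrite E1 // mulrC divfK // hU.
  by exists (h.@[x] ^+ k * t); rewrite E1.
rewrite /is_Ga_action /=; split.
- move=> t x /po1 Xx; apply/po1.
  case: hXc => S HS; apply: (proj2 (HS _)) => p Sp.
  rewrite compQ; apply: (dens _ Xx) => z Uz.
  rewrite -compQ; have [Xq _] : U (ga_map 1 Q 0 t z) by rewrite E1 //; apply: stabU.
  exact: (proj1 (HS _) Xq p Sp).
- by move=> x _; rewrite gmapQ; apply: functional_extensionality => i; rewrite QtE mul0r addr0 mevalXU.
- move=> s t x /po1 Xx; apply: functional_extensionality => i.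
  apply/eqP; rewrite -subr_eq0; apply/eqP.
  have -> : ga_map 1 Q 0 s (ga_map 1 Q 0 t x) i = (Qt s i \mPo qtup t).@[x] by rewrite gmapQ compQ.
  have -> : ga_map 1 Q 0 (s+t) x i = (Qt (s+t) i).@[x] by rewrite gmapQ.
  rewrite -mevalB; apply: (dens _ Xx) => z Uz.
  rewrite mevalB -compQ.
  have -> : (Qt (s+t) i).@[z] = ga_map 1 Q 0 (s+t) z i. by rewrite gmapQ.
  have -> : (Qt s i).@[ga_map 1 Q 0 t z] = ga_map 1 Q 0 s (ga_map 1 Q 0 t z) i by rewrite (gmapQ s).
  by rewrite compQU // subrr.
- move=> t t0.
  move: hH; rewrite /is_Ga_action /= => -[_ _ _ A].
  have [x0 [Ux0 ne]] := A 1 (oner_neq0 _).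
  case: (classic (ga_map 1 Q 0 t x0 = x0)) => e; last first.
    by exists x0; split => //; apply/po1; case: Ux0.
  exfalso; apply: ne.
  pose c := h.@[x0]^+k * t.
  have c0 : c != 0 by rewrite mulf_neq0 // hU.
  have ac : a c x0 = x0 by rewrite -E1.
  have am : forall m : nat, a (m%:R * c) x0 = x0.
    elim=> [|m IH]; first by rewrite mul0r id0.
    by rewrite -nat1r mulrDl mul1r compU // IH.
  apply: functional_extensionality => i.
  pose g := map_poly (meval x0) (P i) - (x0 i * h.@[x0]^+k)%:P.
  have gz : g = 0.
    apply: (inf_roots hK c0) => m.
    have := congr1 (fun f => f i) (am m); rewrite /a /ga_map /= => E.
    by rewrite /g hornerD hornerN hornerC -E divfK ?subrr // hU.
  have := congr1 (fun p => p.[1]) gz; rewrite /g hornerD hornerN hornerC horner0 => /eqP.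
  rewrite subr_eq0 => /eqP E2.
  by rewrite /a /ga_map E2 mulfK // hU.
Qed.

End Main.

Unset Implicit Arguments. Set Strict Implicit. Set Printing Implicit Defensive.

Theorem proposition4 (K : closedFieldType) (hK : [pchar K] =i pred0)
  (n : nat) (X : point K n -> Prop) (hXc : zclosed X) (hXi : irreducible X)
  (h : {mpoly K[n]}) (P : 'I_n -> {poly {mpoly K[n]}}) (k : nat)
  (hH : is_Ga_action X h P k) :
  exists (Q : 'I_n -> {poly {mpoly K[n]}}) (k' : nat),
    is_Ga_action X 1 Q k' /\
    forall x, principal_open X h x ->
      forall y, ga_orbit h P k x y <-> ga_orbit 1 Q k' x y.
Proof.
have [A B] := main_Q hH hXi hXc hK.
by exists (Q h P k), 0%N; split.
Qed.
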